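(* Let $\Psi,\Omega\subseteq\mathbb{F}[x;\sigma,\delta]$ be finite non-empty sets of skew polynomials of degree at least $1$ such that $\Psi\le\Omega$. If $\Omega$ is P-independent, then so is $\Psi$.
   Context: Let $\mathbb{F}$ be a division ring, $\sigma$ a ring endomorphism of $\mathbb{F}$ and $\delta$ a $\sigma$-derivation; $\mathbb{F}[x;\sigma,\delta]$ is the skew polynomial ring with $xa=\sigma(a)x+\delta(a)$ (a domain with right Euclidean division). For sets $\Psi,\Omega$ of skew polynomials, $\Psi\le\Omega$ means: for every finite non-empty subset $\{Q_1,\dots,Q_n\}\subseteq\Psi$ of size $n$ there is a subset $\{P_1,\dots,P_n\}\subseteq\Omega$ of size $n$ with $Q_i$ dividing $P_i$ on the right for each $i$. For a set $\Omega$, $I(\Omega)$ is the left ideal of skew polynomials right-divisible by every element of $\Omega$, $F_\Omega$ its monic generator of minimal degree (or $0$). $\Omega$ is P-independent if it is finite, $I(\Omega)\neq\{0\}$, and $\deg F_\Omega=\sum_{P\in\Omega}\deg P$. *)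

(* Defs.v *)
From HB Require Import structures.
From mathcomp Require Import all_boot all_order all_algebra.
Set Implicit Arguments.
Unset Strict Implicit.
Unset Printing Implicit Defensive.
Import Order.TTheory GRing.Theory.
Local Open Scope ring_scope.

(* Skew polynomials F[x; sigma, delta] are represented by their (ordinary)
   coefficient sequences {poly F}: p = \sum_i p`_i x^i (coefficients on the
   left).  Only the multiplication differs from {poly F}; it is defined below
   from the commutation rule x a = sigma(a) x + delta(a). *)

Definition division_ring (F : unitRingType) : Prop :=
  forall a : F, a != 0 -> a \is a GRing.unit.

Definition sigma_derivation (F : unitRingType) (sigma : {rmorphism F -> F})
  (delta : {additive F -> F}) : Prop :=
  forall a b : F, delta (a * b) = sigma a * delta b + delta a * b.

(* left multiplication by x:  x * (\sum a_i x^i) = \sum (sigma(a_i) x^{i+1} + delta(a_i) x^i) *)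
Definition skew_xmul (F : unitRingType) (sigma : F -> F) (delta : F -> F)
  (q : {poly F}) : {poly F} :=
  map_poly sigma q * 'X + map_poly delta q.

Definition skew_mul (F : unitRingType) (sigma : F -> F) (delta : F -> F)
  (p q : {poly F}) : {poly F} :=
  \sum_(i < size p) (p`_i)%:P * iter i (skew_xmul sigma delta) q.

Definition rdivides (F : unitRingType) (sigma delta : F -> F) (Q P : {poly F}) : Prop :=
  exists R : {poly F}, P = skew_mul sigma delta R Q.

Definition in_I (F : unitRingType) (sigma delta : F -> F) (Om : seq {poly F})
  (P : {poly F}) : Prop :=
  forall Q, Q \in Om -> rdivides sigma delta Q P.

(* Psi <= Omega (finite sets represented by duplicate-free sequences) *)
Definition skew_le (F : unitRingType) (sigma delta : F -> F)
  (Psi Om : seq {poly F}) : Prop :=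
  forall s : seq {poly F}, uniq s -> s != [::] -> {subset s <= Psi} ->
    exists t : seq {poly F},
      [/\ uniq t, size t = size s, {subset t <= Om} &
          forall i, (i < size s)%N -> rdivides sigma delta s`_i t`_i].

Definition P_independent (F : unitRingType) (sigma delta : F -> F)
  (Om : seq {poly F}) : Prop :=
  (exists G : {poly F}, G != 0 /\ in_I sigma delta Om G) /\
  (exists FO : {poly F},
     [/\ FO \is monic, in_I sigma delta Om FO,
         (forall G : {poly F}, G != 0 -> in_I sigma delta Om G -> (size FO <= size G)%N) &
         (size FO).-1 = (\sum_(P <- Om) (size P).-1)%N]).

(* Main.v *)
Require Import Defs.
From HB Require Import structures.
From mathcomp Require Import all_boot all_order all_algebra.
From mathcomp Require Import zify.
From Stdlib Require Import Classical_Prop.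
Import GRing.Theory.
Local Open Scope ring_scope.

Set Implicit Arguments.
Unset Strict Implicit.

Lemma skew_mulE (F : unitRingType) (s d : F -> F) (p q : {poly F}) n :
  (size p <= n)%N ->
  skew_mul s d p q = \sum_(i < n) (p`_i)%:P * iter i (skew_xmul s d) q.
Proof.
move=> hn; rewrite /skew_mul (big_ord_widen n (fun i => (p`_i)%:P * iter i (skew_xmul s d) q) hn).
rewrite big_mkcond; apply: eq_bigr => i _.
case: ltnP => // hi; by rewrite nth_default // mul0r.
Qed.

Lemma skew_mul0p (F : unitRingType) (s d : F -> F) q : skew_mul s d 0 q = 0.
Proof. by rewrite /skew_mul size_poly0 big_ord0. Qed.

Lemma skew_mulDl (F : unitRingType) (s d : F -> F) p1 p2 q :
  skew_mul s d (p1 + p2) q = skew_mul s d p1 q + skew_mul s d p2 q.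
Proof.
set n := maxn (size p1) (size p2).
rewrite (@skew_mulE _ s d (p1+p2) q n); last by apply: (leq_trans (size_polyD _ _)).
rewrite (@skew_mulE _ s d p1 q n) ?leq_maxl // (@skew_mulE _ s d p2 q n) ?leq_maxr //.
rewrite -big_split; apply: eq_bigr => i _.
by rewrite coefD polyCD mulrDl.
Qed.

Lemma skew_mulCl (F : unitRingType) (s d : F -> F) c p q :
  skew_mul s d (c%:P * p) q = c%:P * skew_mul s d p q.
Proof.
rewrite (@skew_mulE _ s d _ q (size p)); last by rewrite mul_polyC size_scale_leq.
rewrite /skew_mul mulr_sumr; apply: eq_bigr => i _.
by rewrite coefCM polyCM mulrA.
Qed.

Lemma skew_mul_rec (F : unitRingType) (s d : F -> F) p c q :
  skew_mul s d (p * 'X + c%:P) q =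
  skew_mul s d p (skew_xmul s d q) + c%:P * q.
Proof.
rewrite (@skew_mulE _ s d _ q (size p).+1); last first.
  rewrite size_MXaddC; by case: ifP.
rewrite big_ord_recl /= coefD coefMX coefC /= add0r addrC; congr (_ + _).
rewrite /skew_mul; apply: eq_bigr => i _.
rewrite coefD coefMX coefC /= addr0. by rewrite -iterSr.
Qed.

Lemma skew_mulC (F : unitRingType) (s d : F -> F) c q :
  skew_mul s d c%:P q = c%:P * q.
Proof.
have := skew_mul_rec s d 0 c q.
by rewrite mul0r add0r skew_mul0p add0r.
Qed.

Lemma coef_xmul (F : unitRingType) (sigma : {rmorphism F -> F})
  (delta : {additive F -> F}) q i :
  (skew_xmul sigma delta q)`_i =
  (if i is j.+1 then sigma q`_j else 0) + delta q`_i.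
Proof.
by rewrite /skew_xmul coefD coefMX coef_map coef_map; case: i.
Qed.

Lemma xmulD (F : unitRingType) (sigma : {rmorphism F -> F})
  (delta : {additive F -> F}) a b :
  skew_xmul sigma delta (a + b) = skew_xmul sigma delta a + skew_xmul sigma delta b.
Proof.
apply/polyP => i; rewrite coefD !coef_xmul !coefD !raddfD.
case: i => [|i]; rewrite ?add0r ?addr0.
  by [].

by rewrite coefD raddfD addrACA.
Qed.

Lemma xmul0 (F : unitRingType) (sigma : {rmorphism F -> F})
  (delta : {additive F -> F}) :
  skew_xmul sigma delta 0 = 0.
Proof.
apply/polyP => i; rewrite coef_xmul !coef0; case: i => [|i]; rewrite ?coef0 ?raddf0 ?addr0 //.
Qed.

Lemma xmulC (F : unitRingType) (sigma : {rmorphism F -> F})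
  (delta : {additive F -> F}) (hdelta : sigma_derivation sigma delta) c r :
  skew_xmul sigma delta (c%:P * r) =
  (sigma c)%:P * skew_xmul sigma delta r + (delta c)%:P * r.
Proof.
apply/polyP => i; rewrite [LHS]coef_xmul coefD !coefCM coef_xmul.
case: i => [|i]; rewrite ?coefCM hdelta ?add0r ?mulr0 ?add0r ?rmorphM ?mulrDr ?addrA //.
Qed.

Lemma xmul_skew_mul (F : unitRingType) (sigma : {rmorphism F -> F})
  (delta : {additive F -> F}) (hdelta : sigma_derivation sigma delta) q r :
  skew_xmul sigma delta (skew_mul sigma delta q r) =
  skew_mul sigma delta (skew_xmul sigma delta q) r.
Proof.
elim/poly_ind: q r => [|q c IH] r.
  by rewrite skew_mul0p xmul0 skew_mul0p.
have -> : skew_xmul sigma delta (q * 'X + c%:P) =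
   (skew_xmul sigma delta q + (sigma c)%:P) * 'X + (delta c)%:P.
  apply/polyP => i; rewrite [LHS]coef_xmul [RHS]coefD coefMX coefC.
  case: i => [|i] /=.
    by rewrite coefD coefMX coefC /= !add0r.
  rewrite addr0 [RHS]coefD coef_xmul coefC !coefD !coefMX !coefC /=.
  case: i => [|i] /=.
    by rewrite !addr0 !add0r addrC.
  by rewrite !addr0.
rewrite skew_mul_rec xmulD IH xmulC // skew_mul_rec skew_mulDl skew_mulC.
by rewrite addrA.
Qed.

Lemma skew_mulA (F : unitRingType) (sigma : {rmorphism F -> F})
  (delta : {additive F -> F}) (hdelta : sigma_derivation sigma delta) p q r :
  skew_mul sigma delta (skew_mul sigma delta p q) r =
  skew_mul sigma delta p (skew_mul sigma delta q r).
Proof.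
elim/poly_ind: p q r => [|p c IH] q r.
  by rewrite !skew_mul0p.
rewrite !skew_mul_rec skew_mulDl IH skew_mulCl -xmul_skew_mul //.
Qed.

Lemma unit_neq0' (F : unitRingType) (a : F) : a \is a GRing.unit -> a != 0.
Proof. by apply: contraTneq => ->; rewrite unitr0. Qed.

Lemma iter_sigma_unit (F : unitRingType) (sigma : {rmorphism F -> F}) k a :
  a \is a GRing.unit -> iter k sigma a \is a GRing.unit.
Proof. by elim: k => //= k IH ha; apply: rmorph_unit; apply: IH. Qed.

Lemma size_map_le (F : unitRingType) (f : {additive F -> F}) (q : {poly F}) :
  (size (map_poly f q) <= size q)%N.
Proof.
apply/leq_sizeP => j hj; by rewrite coef_map nth_default // raddf0.
Qed.

Lemma size_xmul (F : unitRingType) (sigma : {rmorphism F -> F})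
  (delta : {additive F -> F}) (hF : division_ring F) q :
  q != 0 -> size (skew_xmul sigma delta q) = (size q).+1 /\
            lead_coef (skew_xmul sigma delta q) = sigma (lead_coef q).
Proof.
move=> hq.
have hu : sigma (lead_coef q) \is a GRing.unit.
  by apply: rmorph_unit; apply: hF; rewrite lead_coef_eq0.
have h0 : sigma (lead_coef q) != 0 by apply: unit_neq0'.
have hs : size (map_poly sigma q) = size q by apply: size_map_poly_id0.
have hm : map_poly sigma q != 0 by rewrite -size_poly_eq0 hs size_poly_eq0.
have hl : (size (map_poly delta q) < size (map_poly sigma q * 'X)%R)%N.
  by rewrite size_mulX // hs ltnS size_map_le.
rewrite /skew_xmul size_polyDl // lead_coefDl // size_mulX // hs lead_coefMX.
by rewrite lead_coef_map_id0 ?raddf0.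
Qed.

Lemma size_skew_mul (F : unitRingType) (sigma : {rmorphism F -> F})
  (delta : {additive F -> F}) (hF : division_ring F) p q :
  p != 0 -> q != 0 ->
  size (skew_mul sigma delta p q) = (size p + size q).-1 /\
  lead_coef (skew_mul sigma delta p q) =
     lead_coef p * iter (size p).-1 sigma (lead_coef q).
Proof.
elim/poly_ind: p q => [|p c IH] q; first by rewrite eqxx.
move=> hp hq; rewrite skew_mul_rec.
have [hp0 | p0] := eqVneq p 0.
  subst p; rewrite mul0r add0r in hp *; rewrite skew_mul0p add0r.
  have hc : c != 0 by rewrite -polyC_eq0.
  have hu : GRing.lreg c by apply: mulrI; apply: hF.
  rewrite mul_polyC lreg_size // lead_coef_lreg // size_polyC hc lead_coefC /=.
  by rewrite add0n.
have [hs1 hl1] := size_xmul sigma delta hF hq.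
have hxq : skew_xmul sigma delta q != 0 by rewrite -size_poly_eq0 hs1.
have [hs hl] := IH _ p0 hxq.
have hsp : size p != 0%N by rewrite size_poly_eq0.
have hlt : (size (c%:P * q)%R < size (skew_mul sigma delta p (skew_xmul sigma delta q)))%N.
  rewrite hs hs1 mul_polyC; apply: (leq_ltn_trans (size_scale_leq _ _)).
  by move: hsp; case: (size p) => // n _; rewrite addSn /= addnS ltnS leq_addl.
rewrite size_polyDl // lead_coefDl // hs hs1 hl hl1.
have hsz : size (p * 'X + c%:P) = (size p).+1.
  by rewrite size_MXaddC (negbTE p0).
rewrite hsz addSn /= addnS /=; split => //.
have -> : lead_coef (p * 'X + c%:P) = lead_coef p.
  rewrite lead_coefDl ?lead_coefMX // size_mulX // size_polyC.
  by move: hsp; case: (size p) => //; case: (c != 0).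
by move: hsp; case: (size p) => // n _ /=; rewrite -iterSr.
Qed.

Lemma skew_mul_neq0 (F : unitRingType) (sigma : {rmorphism F -> F})
  (delta : {additive F -> F}) (hF : division_ring F) p q :
  p != 0 -> q != 0 -> skew_mul sigma delta p q != 0.
Proof.
move=> hp hq; have [hs _] := size_skew_mul sigma delta hF hp hq.
rewrite -size_poly_eq0 hs.
move: hp hq; rewrite -!size_poly_eq0 => hp hq; lia.
Qed.

Lemma size_sub_lead (F : unitRingType) (p q : {poly F}) :
  p != 0 -> size p = size q -> lead_coef p = lead_coef q ->
  (size (p - q)%R < size p)%N.
Proof.
move=> hp hs hl.
have hsp : (0 < size p)%N by rewrite size_poly_gt0.
suff : (size (p - q)%R <= (size p).-1)%N by move: hsp; clear; lia.
apply/leq_sizeP => j hj; rewrite coefB.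
have [->|hne] := eqVneq j (size p).-1.
  by move: hl; rewrite /lead_coef -hs => ->; rewrite subrr.
have hj' : (size p <= j)%N by move: hj hne hsp; clear; lia.
by rewrite !nth_default ?subrr // -hs.
Qed.

Lemma skew_div (F : unitRingType) (sigma : {rmorphism F -> F})
  (delta : {additive F -> F}) (hF : division_ring F) (B : {poly F}) :
  B != 0 -> forall P, exists Q R,
    P = skew_mul sigma delta Q B + R /\ (size R < size B)%N.
Proof.
move=> hB P.
have hsB : (0 < size B)%N by rewrite size_poly_gt0.
move: {2}(size P) (leqnn (size P)) => n; elim: n P => [|n IH] P hP.
  exists 0, P; rewrite skew_mul0p add0r; split => //; move: hP hsB; clear; lia.
have [hlt|hge] := ltnP (size P) (size B).
  by exists 0, P; rewrite skew_mul0p add0r.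
have hP0 : P != 0 by rewrite -size_poly_gt0; move: hge hsB; clear; lia.
set k := (size P - size B)%N.
set w := iter k sigma (lead_coef B).
have hw : w \is a GRing.unit by apply: iter_sigma_unit; apply: hF; rewrite lead_coef_eq0.
have hlP : lead_coef P \is a GRing.unit by apply: hF; rewrite lead_coef_eq0.
set c := lead_coef P * w^-1.
have hc : c \is a GRing.unit by rewrite /c unitrMl ?unitrV.
have hcr : GRing.lreg c by apply: mulrI.
set m := c%:P * 'X^k.
have hsm : size m = k.+1 by rewrite /m mul_polyC lreg_size // size_polyXn.
have hlm : lead_coef m = c by rewrite /m mul_polyC lead_coef_lreg // lead_coefXn mulr1.
have hm0 : m != 0 by rewrite -size_poly_eq0 hsm.
have [hs hl] := size_skew_mul sigma delta hF hm0 hB.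
have hs' : size (skew_mul sigma delta m B) = size P.
  by rewrite hs hsm /k; move: hge hsB; clear; lia.
have hl' : lead_coef (skew_mul sigma delta m B) = lead_coef P.
  by rewrite hl hlm hsm /= /c divrK.
have hd := size_sub_lead hP0 (esym hs') (esym hl').
have [Q [R [hQR hR]]] := IH (P - skew_mul sigma delta m B) ltac:(move: hd hP; clear; lia).
exists (Q + m), R; split => //.
by rewrite skew_mulDl addrAC -hQR subrK.
Qed.

Lemma pigeon (F : unitRingType) (hF : division_ring F) n :
  forall (v : 'I_n.+1 -> nat -> F),
  exists c : 'I_n.+1 -> F, (exists i, c i != 0) /\
    forall j, (j < n)%N -> \sum_i c i * v i j = 0.
Proof.
elim: n => [|n IH] v.
  exists (fun _ => 1); split; first by exists ord0; rewrite oner_neq0.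
  by [].
have [/existsP [k hk] | hall] := boolP [exists i, v i n != 0].
  set a := fun i' => v (lift k i') n * (v k n)^-1.
  have [c' [[i0 hi0] hc']] := IH (fun i' j => v (lift k i') j - a i' * v k j).
  have hu : v k n \is a GRing.unit by apply: hF.
  exists (fun i => if unlift k i is Some i' then c' i' else - \sum_i' c' i' * a i').
  split; first by exists (lift k i0); rewrite /= liftK.
  move=> j hj; rewrite (bigD1_ord k) //= unlift_none.
  rewrite [X in _ + X](eq_bigr (fun i' => c' i' * v (lift k i') j)); last by move=> i' _; rewrite liftK.
  have key : \sum_(i' < n.+1) c' i' * v (lift k i') j = \sum_(i' < n.+1) c' i' * (a i' * v k j).
    have [hjn | hjn] := ltnP j n.
      apply/eqP; rewrite -subr_eq0 -sumrB; apply/eqP.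
      rewrite -[RHS](hc' j hjn); apply: eq_bigr => i' _; by rewrite mulrBr.
    have -> : j = n by move: hj hjn; clear; lia.
    apply: eq_bigr => i' _; by rewrite /a divrK.
  rewrite key mulNr mulr_suml addrC; apply/eqP; rewrite subr_eq0; apply/eqP.
  by apply: eq_bigr => i' _; rewrite mulrA.
have hall' : forall i, v i n = 0.
  move=> i; apply/eqP; move/existsPn: hall => /(_ i); by rewrite negbK.
have [c' [[i0 hi0] hc']] := IH (fun i' j => v (lift ord_max i') j).
exists (fun i => if unlift ord_max i is Some i' then c' i' else 0).
split; first by exists (lift ord_max i0); rewrite /= liftK.
move=> j hj; have [hjn | hjn] := ltnP j n.
  rewrite (bigD1_ord ord_max) //= unlift_none mul0r add0r.
  rewrite (eq_bigr (fun i' => c' i' * v (lift ord_max i') j)); last by move=> i' _; rewrite liftK.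
  exact: hc'.
have -> : j = n by move: hj hjn; clear; lia.
by rewrite big1 // => i _; rewrite hall' mulr0.
Qed.

Lemma skew_mul_suml (F : unitRingType) (s d : F -> F) I (r : seq I) (P : pred I)
  (G : I -> {poly F}) A :
  skew_mul s d (\sum_(i <- r | P i) G i) A = \sum_(i <- r | P i) skew_mul s d (G i) A.
Proof.
apply: (big_morph (fun p => skew_mul s d p A)).
  by move=> x y; rewrite skew_mulDl.
exact: skew_mul0p.
Qed.

Lemma single (F : unitRingType) (sigma : {rmorphism F -> F})
  (delta : {additive F -> F}) (hF : division_ring F) (A B : {poly F}) :
  B != 0 -> exists M : {poly F}, [/\ M != 0, (size M <= size B)%N &
     exists T, skew_mul sigma delta M A = skew_mul sigma delta T B].
Proof.
move=> hB.
set n := (size B).-1.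
have hsB : size B = n.+1 by rewrite /n prednK // size_poly_gt0.
have : forall i : 'I_n.+1, exists QR : {poly F} * {poly F},
   skew_mul sigma delta 'X^i A = skew_mul sigma delta QR.1 B + QR.2 /\
   (size QR.2 < size B)%N.
  move=> i; have [Q [R [h1 h2]]] := skew_div sigma delta hF hB (skew_mul sigma delta 'X^i A).
  by exists (Q, R).
case/fin_all_exists => f hf.
have [c [[i0 hi0] hc]] := pigeon hF (fun i j => (f i).2`_j).
set M := \poly_(i < n.+1) c (inord i).
exists M; split.
- apply/eqP => hM; move: hi0; have := congr1 (fun p : {poly F} => p`_i0) hM.
  by rewrite coef_poly ltn_ord inord_val coef0 => ->; rewrite eqxx.
- by rewrite hsB size_poly.
exists (\sum_(i < n.+1) (c i)%:P * (f i).1).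
rewrite /M poly_def skew_mul_suml skew_mul_suml.
have -> : \sum_(i < n.+1) skew_mul sigma delta (c (inord i) *: 'X^i) A =
          \sum_(i < n.+1) (skew_mul sigma delta ((c i)%:P * (f i).1) B + (c i)%:P * (f i).2).
  apply: eq_bigr => i _; rewrite inord_val -mul_polyC skew_mulCl (hf i).1.
  by rewrite mulrDr skew_mulCl.
rewrite big_split /=.
have -> : \sum_(i < n.+1) (c i)%:P * (f i).2 = 0.
  apply/polyP => j; rewrite coef_sum coef0.
  have [hj | hj] := ltnP j n.
    rewrite (eq_bigr (fun i => c i * (f i).2`_j)) ?hc // => i _; by rewrite coefCM.
  rewrite big1 // => i _; rewrite coefCM nth_default ?mulr0 //.
  move: (hf i).2 hj; rewrite hsB => h1 h2; rewrite ltnS in h1; exact: leq_trans h1 h2.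
by rewrite addr0.
Qed.

Lemma multi (F : unitRingType) (sigma : {rmorphism F -> F})
  (delta : {additive F -> F}) (hF : division_ring F)
  (hdelta : sigma_derivation sigma delta) (L : seq ({poly F} * {poly F})) :
  (forall ab, ab \in L -> ab.2 != 0) ->
  exists M : {poly F}, [/\ M != 0, (size M <= 1 + \sum_(ab <- L) (size ab.2).-1)%N &
    forall ab, ab \in L -> exists T, skew_mul sigma delta M ab.1 = skew_mul sigma delta T ab.2].
Proof.
elim: L => [|ab L IH] hL.
  exists 1; split => //; first exact: oner_neq0.
  by rewrite big_nil size_poly1.
have [M0 [hM0 hsM0 hcM0]] : exists M : {poly F}, [/\ M != 0, (size M <= 1 + \sum_(ab <- L) (size ab.2).-1)%N &
    forall ab, ab \in L -> exists T, skew_mul sigma delta M ab.1 = skew_mul sigma delta T ab.2].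
  by apply: IH => ab' h; apply: hL; rewrite inE h orbT.
have hB : ab.2 != 0 by apply: hL; rewrite inE eqxx.
have [M' [hM' hsM' [T hT]]] := single sigma delta hF (skew_mul sigma delta M0 ab.1) hB.
exists (skew_mul sigma delta M' M0); split.
- exact: skew_mul_neq0.
- have [hs _] := size_skew_mul sigma delta hF hM' hM0.
  rewrite hs big_cons.
  have : (0 < size ab.2)%N by rewrite size_poly_gt0.
  move: hsM' hsM0; clear; lia.
move=> ab'; rewrite inE => /orP [/eqP -> | h].
  by exists T; rewrite skew_mulA.
have [T' hT'] := hcM0 ab' h.
by exists (skew_mul sigma delta M' T'); rewrite skew_mulA // hT' skew_mulA.
Qed.

Lemma delta1 (F : unitRingType) (sigma : {rmorphism F -> F})
  (delta : {additive F -> F}) (hdelta : sigma_derivation sigma delta) :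
  delta 1 = 0.
Proof.
have := hdelta 1 1; rewrite mul1r rmorph1 mul1r mulr1 => h.
by apply: (@addrI _ (delta 1)); rewrite addr0 -h.
Qed.

Lemma xmulXn (F : unitRingType) (sigma : {rmorphism F -> F})
  (delta : {additive F -> F}) (hdelta : sigma_derivation sigma delta) k :
  skew_xmul sigma delta ('X^k : {poly F}) = 'X^(k.+1).
Proof.
have hd : forall b : bool, delta b%:R = 0.
  by case; rewrite /= ?mulr1n ?mulr0n ?(delta1 hdelta) ?raddf0.
apply/polyP => i; rewrite coef_xmul !coefXn hd addr0.
case: i => [|i] /=; rewrite ?coefXn //.
by rewrite eqSS; case: (i == k); rewrite /= ?mulr1n ?mulr0n ?rmorph1 ?rmorph0.
Qed.

Lemma skew_mulXn (F : unitRingType) (sigma : {rmorphism F -> F})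
  (delta : {additive F -> F}) (hdelta : sigma_derivation sigma delta) p k :
  skew_mul sigma delta p ('X^k : {poly F}) = p * 'X^k.
Proof.
elim/poly_ind: p k => [|p c IH] k; first by rewrite skew_mul0p mul0r.
by rewrite skew_mul_rec xmulXn // IH mulrDl -mulrA -exprS.
Qed.

Lemma skew_mulp1 (F : unitRingType) (sigma : {rmorphism F -> F})
  (delta : {additive F -> F}) (hdelta : sigma_derivation sigma delta) p :
  skew_mul sigma delta p 1 = p.
Proof. by have := skew_mulXn hdelta p 0; rewrite expr0 mulr1. Qed.

Lemma ex_min_size (F : unitRingType) (Q : {poly F} -> Prop) :
  (exists G, Q G) -> exists G, Q G /\ forall K, Q K -> (size G <= size K)%N.
Proof.
move=> [G hG]; move: {2}(size G) (leqnn (size G)) => n.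
elim: n G hG => [|n IH] G hG hs.
  by exists G; split => // K _; move: hs; rewrite leqn0 => /eqP ->.
case: (classic (exists K, Q K /\ (size K < size G)%N)) => [[K [hK hlt]] | hno].
  by apply: (IH K hK); rewrite -ltnS; apply: leq_trans hlt hs.
exists G; split => // K hK; rewrite leqNgt; apply/negP => hlt.
by apply: hno; exists K.
Qed.

Lemma sum_nth (T : Type) (x0 : T) (s : seq T) (f : T -> nat) :
  (\sum_(x <- s) f x = \sum_(i < size s) f (nth x0 s i))%N.
Proof. by rewrite (big_nth x0) big_mkord. Qed.

Unset Implicit Arguments.
Set Strict Implicit.

Lemma predn2_add (a b : nat) : (0 < a)%N -> (0 < b)%N -> (a + b).-2 = (a.-1 + b.-1)%N.
Proof. lia. Qed.

Lemma arith_final (g fo gm m a b p om tt : nat) : (0 < g)%N -> (fo <= gm)%N -> gm = (m + g).-1 ->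
  (m <= 1 + (a + b))%N -> fo.-1 = om -> om = (tt + b)%N -> tt = (a + p)%N -> (g.-1 < p)%N -> False.
Proof. lia. Qed.

Theorem mainTheorem4 (F : unitRingType) (sigma : {rmorphism F -> F})
  (delta : {additive F -> F})
  (hF : division_ring F) (hdelta : sigma_derivation sigma delta)
  (Psi Om : seq {poly F})
  (uPsi : uniq Psi) (uOm : uniq Om)
  (nePsi : Psi != [::]) (neOm : Om != [::])
  (degPsi : forall P, P \in Psi -> (1 < size P)%N)
  (degOm : forall P, P \in Om -> (1 < size P)%N)
  (hle : skew_le sigma delta Psi Om) :
  P_independent sigma delta Om -> P_independent sigma delta Psi.
Proof.
move=> [_ [FO [hFOm hFOI hFOmin hFOdeg]]].
have [t [ut st sbt hdiv]] := hle Psi uPsi nePsi (fun x h => h).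
set n := size Psi.
have rtrans : forall Q P G, rdivides sigma delta Q P -> rdivides sigma delta P G ->
    rdivides sigma delta Q G.
  move=> Q P G [R ->] [S ->]; exists (skew_mul sigma delta S R).
  by rewrite skew_mulA.
have ht : forall i, (i < n)%N -> t`_i \in Om.
  by move=> i hi; apply: sbt; apply: mem_nth; rewrite st.
have hIFO : in_I sigma delta Psi FO.
  move=> Q hQ; have hi : (index Q Psi < n)%N by rewrite index_mem.
  rewrite -(nth_index 0 hQ); apply: rtrans (hdiv _ hi) _.
  exact: hFOI _ (ht _ hi).
have hFO0 : FO != 0 by apply: monic_neq0.
split; first by exists FO.
have [G [[hG0 hIG] hmin]] := @ex_min_size F (fun G => G != 0 /\ in_I sigma delta Psi G)
   (ex_intro _ FO (conj hFO0 hIFO)).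
set l := lead_coef G.
have hl : l \is a GRing.unit by apply: hF; rewrite lead_coef_eq0.
have hli : GRing.lreg l^-1 by apply: mulrI; rewrite unitrV.
set FP := (l^-1)%:P * G.
have hsFP : size FP = size G by rewrite /FP mul_polyC lreg_size.
exists FP; split.
- by apply/monicP; rewrite /FP mul_polyC lead_coef_lreg // mulVr.
- move=> Q hQ; have [S hS] := hIG Q hQ.
  by exists ((l^-1)%:P * S); rewrite skew_mulCl /FP hS.
- by move=> K hK hIK; rewrite hsFP; apply: hmin.
rewrite hsFP.
have hup : ((size G).-1 <= \sum_(P <- Psi) (size P).-1)%N.
  have hL1 : forall ab, ab \in [seq (1 : {poly F}, Q) | Q <- Psi] -> ab.2 != 0.
    move=> ab /mapP [Q hQ ->] /=.
    by rewrite -size_poly_gt0; move: (degPsi _ hQ); clear; lia.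
  have [M [hM0 hsM hcM]] := multi hF hdelta hL1.
  have hIM : in_I sigma delta Psi M.
    move=> Q hQ; have [T hT] := hcM (1, Q) (map_f _ hQ).
    by exists T; rewrite -hT /= skew_mulp1.
  have := hmin M (conj hM0 hIM); rewrite big_map /= in hsM.
  move=> h2; rewrite -subn1 leq_subLR; exact: leq_trans h2 hsM.
have [hlt | hge] := ltnP ((size G).-1) (\sum_(P <- Psi) (size P).-1); last first.
  by apply/eqP; rewrite eqn_leq hup hge.
exfalso.
have : forall i : 'I_n, exists SR : {poly F} * {poly F},
    G = skew_mul sigma delta SR.1 Psi`_i /\ t`_i = skew_mul sigma delta SR.2 Psi`_i.
  move=> i; have [S hS] := hIG _ (mem_nth 0 (ltn_ord i)).
  have [R hR] := hdiv _ (ltn_ord i).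
  by exists (S, R).
case/fin_all_exists => f hf.
set Om2 := [seq P <- Om | predC (mem t) P].
set L := [seq f i | i <- index_enum 'I_n] ++ [seq (G, P) | P <- Om2].
have hR0 : forall i : 'I_n, (f i).2 != 0.
  move=> i; apply/eqP => h; have := (hf i).2; rewrite h skew_mul0p => h0.
  by move: (degOm _ (ht _ (ltn_ord i))); rewrite h0 size_poly0.
have hL : forall ab, ab \in L -> ab.2 != 0.
  move=> ab; rewrite mem_cat => /orP [/mapP [i _ ->] | /mapP [P hP ->]] //=.
  move: hP; rewrite mem_filter => /andP [_ hP].
  by rewrite -size_poly_gt0; move: (degOm _ hP); clear; lia.
have [M [hM0 hsM hcM]] := multi hF hdelta hL.
set Gm := skew_mul sigma delta M G.
have hGm0 : Gm != 0 by apply: skew_mul_neq0.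
have hIGm : in_I sigma delta Om Gm.
  move=> P hP; have [hPt | hPt] := boolP (P \in t).
    have hi : (index P t < n)%N by rewrite /n -st index_mem.
    pose io := Ordinal hi.
    have hPe : P = t`_io by rewrite /= nth_index.
    clearbody io.
    have [T hT] := hcM (f io) ltac:(by rewrite mem_cat map_f ?mem_index_enum).
    exists T.
    rewrite hPe (hf io).2 /Gm {1}(hf io).1 -skew_mulA // hT skew_mulA //.
  have [T hT] := hcM (G, P) ltac:(by rewrite mem_cat orbC map_f // mem_filter /= hPt).
  by exists T.
have hle1 := hFOmin Gm hGm0 hIGm.
have [hsGm _] := size_skew_mul sigma delta hF hM0 hG0.
have hpe : perm_eq ([seq P <- Om | mem t P] ++ Om2) Om by rewrite perm_filterC.
have hsumOm : (\sum_(P <- Om) (size P).-1 =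
   \sum_(P <- t) (size P).-1 + \sum_(P <- Om2) (size P).-1)%N.
  rewrite -(perm_big _ hpe) big_cat /=; congr (_ + _)%N.
  apply: perm_big; apply: uniq_perm; rewrite ?filter_uniq //.
  by move=> x; rewrite mem_filter; case hx: (x \in t) => //=; rewrite sbt.
have hsumt : (\sum_(P <- t) (size P).-1 =
   \sum_(i < n) (size (f i).2).-1 + \sum_(P <- Psi) (size P).-1)%N.
  rewrite (sum_nth 0) (sum_nth 0 Psi) -/n -big_split /=.
  rewrite (big_ord_widen n (fun i => (size t`_i).-1)) ?st //.
  rewrite big_mkcond; apply: eq_bigr => i _; rewrite ltn_ord.
  rewrite (hf i).2.
  have hP0 : Psi`_i != 0.
    by apply: contraTneq (degPsi _ (mem_nth 0 (ltn_ord i))) => ->; rewrite size_poly0.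
  have [hs _] := size_skew_mul sigma delta hF (hR0 i) hP0.
  rewrite hs; move: (hR0 i) hP0; rewrite -!size_poly_gt0; exact: predn2_add.
rewrite /L big_cat !big_map /= in hsM.
move: hle1 hsGm hsM hFOdeg hsumOm hsumt hlt; rewrite -/Gm.
have : (0 < size G)%N by rewrite size_poly_gt0.
move=> h1 h2 h3 h4 h5 h6 h7 h8; exact: (@arith_final _ _ _ _ _ _ _ _ _ h1 h2 h3 h4 h5 h6 h7 h8).
Qed.
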